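(* Let $0<p<1$, $q=1-p$, and let $c$ be the circle centered at the origin with radius $r$, $0<r<\frac{-1+\sqrt{1+4pq}}{2q}$. Let $X=(x_1,\dots,x_N)$, $Y=(y_1,\dots,y_N)\in\mathbb{Z}^N$ with $x_1<\cdots<x_N$, $y_1<\cdots<y_N$ and $x_i\ge y_i$ for all $i$. Let $\sigma\in S_N$, $\sigma\neq\mathrm{Id}$, and for each inversion $(\beta,\alpha)$ of $\sigma$ choose $E_{\beta\alpha}$ to be one of $S_{\beta\alpha},P_{\beta\alpha},Q_{\beta\alpha},pT_{\beta\alpha},qT_{\beta\alpha},0$. Then $$\int_c\cdots\int_c\Big(\prod_{(\beta,\alpha)}E_{\beta\alpha}\Big)\prod_{i=1}^N\xi_{\sigma(i)}^{x_i-y_{\sigma(i)}-1}\,d\xi_1\cdots d\xi_N=0,$$ where the product is over all inversions $(\beta,\alpha)$ of $\sigma$.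
   Context: An inversion of $\sigma$ is a pair $(\beta,\alpha)$ with $\beta>\alpha$ such that $\beta$ appears to the left of $\alpha$ in the word $\sigma(1)\cdots\sigma(N)$. For nonzero complex $\xi_\alpha,\xi_\beta$, with $D=p+q\xi_\alpha\xi_\beta-\xi_\alpha$: $S_{\beta\alpha}=-\frac{p+q\xi_\alpha\xi_\beta-\xi_\beta}{D}$, $P_{\beta\alpha}=\frac{(p-q\xi_\alpha)(\xi_\beta-1)}{D}$, $Q_{\beta\alpha}=\frac{(p-q\xi_\beta)(\xi_\alpha-1)}{D}$, $T_{\beta\alpha}=\frac{\xi_\beta-\xi_\alpha}{D}$. *)

(* Defs.v *)
From Stdlib Require Import Reals ZArith List Arith Bool.
From Coquelicot Require Import Coquelicot.
Open Scope R_scope.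

Definition Cpowz (z : C) (k : Z) : C :=
  if (0 <=? k)%Z then Cpow z (Z.to_nat k) else Cinv (Cpow z (Z.to_nat (- k))).

Definition circ_pt (r t : R) : C := (r * cos t, r * sin t).

(** Contour integral over the positively oriented circle |z| = r:
    int_c f(z) dz = int_0^{2 pi} f(r e^{it}) * (i r e^{it}) dt. *)
Definition circ_int (r : R) (f : C -> C) : C :=
  RInt (V := C_R_CompleteNormedModule)
    (fun t => Cmult (f (circ_pt r t)) (Cmult (0, 1) (circ_pt r t))) 0 (2 * PI).

(** Iterated contour integral over c^n of F in the variables xi_0, ..., xi_{n-1};
    xi_0 is the innermost integral (d xi_1 ... d xi_N in the paper's 1-based notation). *)
Fixpoint iter_circ (r : R) (n : nat) (F : (nat -> C) -> C) : C :=
  match n with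
  | O => F (fun _ => RtoC 0)
  | S m => circ_int r (fun z =>
             iter_circ r m (fun xi => F (fun k => if Nat.eqb k m then z else xi k)))
  end.

Section Factors.
Variables (p q : R) (xa xb : C).
Definition Dden : C := Cminus (Cplus (RtoC p) (Cmult (RtoC q) (Cmult xa xb))) xa.
Definition S_f : C :=
  Copp (Cdiv (Cminus (Cplus (RtoC p) (Cmult (RtoC q) (Cmult xa xb))) xb) Dden).
Definition P_f : C :=
  Cdiv (Cmult (Cminus (RtoC p) (Cmult (RtoC q) xa)) (Cminus xb 1)) Dden.
Definition Q_f : C :=
  Cdiv (Cmult (Cminus (RtoC p) (Cmult (RtoC q) xb)) (Cminus xa 1)) Dden.
Definition T_f : C := Cdiv (Cminus xb xa) Dden.
End Factors.

Inductive Echoice := ES | EP | EQ | EpT | EqT | E0.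

Definition Eval (p q : R) (e : Echoice) (xa xb : C) : C :=
  match e with
  | ES => S_f p q xa xb
  | EP => P_f p q xa xb
  | EQ => Q_f p q xa xb
  | EpT => Cmult (RtoC p) (T_f p q xa xb)
  | EqT => Cmult (RtoC q) (T_f p q xa xb)
  | E0 => RtoC 0
  end.

Definition Cprod (l : list C) : C := fold_right Cmult (RtoC 1) l.

(** An inversion is a pair beta > alpha with beta to the left of alpha
    in the word sigma(0) ... sigma(N-1), i.e. beta = sigma i, alpha = sigma j with
    i < j and sigma i > sigma j; this is a bijection between such position pairs
    and inversions. *)
Definition inv_prod (N : nat) (sigma : nat -> nat) (G : nat -> nat -> C) : C :=
  Cprod (flat_map (fun i =>
           map (fun j => if andb (Nat.ltb i j) (Nat.ltb (sigma j) (sigma i))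
                         then G (sigma i) (sigma j) else RtoC 1)
               (seq 0 N))
         (seq 0 N)).

Definition is_perm (N : nat) (sigma : nat -> nat) : Prop :=
  (forall i, (i < N)%nat -> (sigma i < N)%nat) /\
  (forall i j, (i < N)%nat -> (j < N)%nat -> sigma i = sigma j -> i = j).

(* Main.v *)
Require Import Defs.
From Stdlib Require Import Reals ZArith List Arith Bool Lia Lra FunctionalExtensionality.
From Coquelicot Require Import Coquelicot.
Open Scope R_scope.



Lemma C_eq (a b : C) : fst a = fst b -> snd a = snd b -> a = b.
Proof. destruct a, b; simpl; intros; subst; auto. Qed.

Lemma circ_mod (r t : R) : 0 <= r -> Cmod (circ_pt r t) = r.
Proof.
  intros Hr. unfold Cmod, circ_pt; simpl.
  replace (r * cos t * (r * cos t * 1) + r * sin t * (r * sin t * 1)) with (r ^ 2 * (Rsqr (sin t) + Rsqr (cos t))) by (unfold Rsqr; ring).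
  rewrite sin2_cos2, Rmult_1_r. apply sqrt_pow2; auto.
Qed.

Lemma Cpow_circ (r t : R) (n : nat) :
  Cpow (circ_pt r t) n = (r ^ n * cos (INR n * t), r ^ n * sin (INR n * t)).
Proof.
  induction n.
  - simpl. rewrite Rmult_0_l, cos_0, sin_0. apply C_eq; simpl; ring.
  - simpl Cpow. rewrite IHn. rewrite S_INR.
    replace ((INR n + 1) * t) with (t + INR n * t) by ring.
    rewrite cos_plus, sin_plus. unfold circ_pt. apply C_eq; simpl; ring.
Qed.

Definition cint (r : R) (f : C -> C) (t : R) : C :=
  Cmult (f (circ_pt r t)) (Cmult (0, 1) (circ_pt r t)).

Lemma scalR (a x : R) : scal (V := R_NormedModule) a x = a * x. Proof. reflexivity. Qed.
Lemma minusR (a x : R) : minus (G := R_NormedModule) a x = a - x. Proof. reflexivity. Qed.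
Lemma plusR (a x : R) : plus (G := R_NormedModule) a x = a + x. Proof. reflexivity. Qed.
Lemma is_RInt_Cmult (h : R -> C) (a b : R) (I c : C) :
  is_RInt (V := C_R_CompleteNormedModule) h a b I ->
  is_RInt (V := C_R_CompleteNormedModule) (fun t => Cmult c (h t)) a b (Cmult c I).
Proof.
  intros H. destruct c as [c1 c2].
  assert (H1 := is_RInt_fct_extend_fst (U := R_NormedModule) (V := R_NormedModule) h a b I H).
  assert (H2 := is_RInt_fct_extend_snd (U := R_NormedModule) (V := R_NormedModule) h a b I H).
  replace (Cmult (c1, c2) I) with ((c1 * fst I - c2 * snd I), (c1 * snd I + c2 * fst I)) by (apply C_eq; simpl; ring).
  apply (is_RInt_fct_extend_pair (U := R_NormedModule) (V := R_NormedModule)).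
  - apply (is_RInt_ext (V := R_NormedModule) (fun t => minus (scal c1 (fst (h t))) (scal c2 (snd (h t))))).
    + intros. reflexivity.
    + apply (is_RInt_minus (V := R_NormedModule)); apply (is_RInt_scal (V := R_NormedModule)); auto.
  - apply (is_RInt_ext (V := R_NormedModule) (fun t => plus (scal c1 (snd (h t))) (scal c2 (fst (h t))))).
    + intros. reflexivity.
    + apply (is_RInt_plus (V := R_NormedModule)); apply (is_RInt_scal (V := R_NormedModule)); auto.
Qed.
Lemma cos_2kpi (k : nat) : cos (INR k * (2 * PI)) = 1.
Proof. replace (INR k * (2*PI)) with (0 + 2 * INR k * PI) by ring. rewrite cos_period. apply cos_0. Qed.
Lemma sin_2kpi (k : nat) : sin (INR k * (2 * PI)) = 0.
Proof. replace (INR k * (2*PI)) with (0 + 2 * INR k * PI) by ring. rewrite sin_period. apply sin_0. Qed.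

Lemma is_RInt_val {V : NormedModule R_AbsRing} (f : R -> V) a b l l' :
  is_RInt f a b l -> l = l' -> is_RInt f a b l'.
Proof. intros H ->. exact H. Qed.

Lemma L_sin (K : R) (k : nat) : is_RInt (V := R_NormedModule) (fun t => K * sin (INR (S k) * t)) 0 (2*PI) 0.
Proof.
  assert (Hc : INR (S k) <> 0) by (apply not_0_INR; lia).
  assert (H2 : cos (INR (S k) * (2*PI)) = 1 /\ sin (INR (S k) * (2*PI)) = 0) by (split; [apply cos_2kpi|apply sin_2kpi]).
  remember (INR (S k)) as c. clear Heqc.
  eapply is_RInt_val.
  apply (is_RInt_derive (V := R_CompleteNormedModule) (fun t => - K * cos (c * t) / c)).
  - intros x _. auto_derive; auto. field. auto.
  - intros x _. apply (ex_derive_continuous (K:=R_AbsRing) (V:=R_NormedModule) (fun t => K * sin (c*t))). auto_derive. auto.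
  - rewrite minusR, (proj1 H2), Rmult_0_r, cos_0. apply Rminus_diag_eq. reflexivity.
Qed.

Lemma L_cos (K : R) (k : nat) : is_RInt (V := R_NormedModule) (fun t => K * cos (INR (S k) * t)) 0 (2*PI) 0.
Proof.
  assert (Hc : INR (S k) <> 0) by (apply not_0_INR; lia).
  assert (H2 : cos (INR (S k) * (2*PI)) = 1 /\ sin (INR (S k) * (2*PI)) = 0) by (split; [apply cos_2kpi|apply sin_2kpi]).
  remember (INR (S k)) as c. clear Heqc.
  eapply is_RInt_val.
  apply (is_RInt_derive (V := R_CompleteNormedModule) (fun t => K * sin (c * t) / c)).
  - intros x _. auto_derive; auto. field. auto.
  - intros x _. apply (ex_derive_continuous (K:=R_AbsRing) (V:=R_NormedModule) (fun t => K * cos (c*t))). auto_derive. auto.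
  - rewrite minusR, (proj2 H2). replace (c * 0) with 0 by ring. rewrite sin_0. change (K * 0 / c - K * 0 / c = 0). field. auto.
Qed.

Lemma mono_int (r : R) (n : nat) :
  is_RInt (V := C_R_CompleteNormedModule) (cint r (fun z => Cpow z n)) 0 (2*PI) (RtoC 0).
Proof.
  apply (is_RInt_fct_extend_pair (U := R_NormedModule) (V := R_NormedModule)).
  - apply (is_RInt_ext (V := R_NormedModule) (fun t => (- r ^ (S n)) * sin (INR (S n) * t))).
    + intros x _. unfold cint. rewrite Cpow_circ. unfold circ_pt, Cmult. cbn [fst snd].
      rewrite S_INR. replace ((INR n + 1) * x) with (INR n * x + x) by ring.
      rewrite sin_plus. simpl. ring.
    + apply L_sin.
  - apply (is_RInt_ext (V := R_NormedModule) (fun t => (r ^ (S n)) * cos (INR (S n) * t))).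
    + intros x _. unfold cint. rewrite Cpow_circ. unfold circ_pt, Cmult. cbn [fst snd].
      rewrite S_INR. replace ((INR n + 1) * x) with (INR n * x + x) by ring.
      rewrite cos_plus. simpl. ring.
    + apply L_cos.
Qed.
Open Scope C_scope.
Fixpoint peval (P : list C) (w : C) : C :=
  match P with nil => RtoC 0 | a :: P' => a + w * peval P' w end.
Fixpoint padd (P Q : list C) : list C :=
  match P, Q with
  | nil, _ => Q
  | _, nil => P
  | a :: P', b :: Q' => (a + b) :: padd P' Q'
  end.
Definition pscal (c : C) (P : list C) := map (fun a => c * a) P.
Fixpoint pmul (P Q : list C) : list C :=
  match P with nil => nil | a :: P' => padd (pscal a Q) (RtoC 0 :: pmul P' Q) end.

Lemma peval_padd P Q w : peval (padd P Q) w = peval P w + peval Q w.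
Proof.
  revert Q; induction P as [|a P IH]; intros Q; simpl.
  - ring.
  - destruct Q as [|b Q]; simpl. ring. rewrite IH. ring.
Qed.
Lemma peval_pscal c P w : peval (pscal c P) w = c * peval P w.
Proof. induction P as [|a P IH]; simpl. ring. rewrite IH. ring. Qed.
Lemma peval_pmul P Q w : peval (pmul P Q) w = peval P w * peval Q w.
Proof.
  induction P as [|a P IH]; simpl. ring.
  rewrite peval_padd, peval_pscal. simpl. rewrite IH. ring.
Qed.

Ltac toC := match goal with |- ?a = ?b => change (@eq C a b) end.

Lemma plusC (x y : C) : plus (G := C_R_CompleteNormedModule) x y = x + y.
Proof. reflexivity. Qed.

Lemma poly_int (r : R) (P : list C) (n : nat) :
  is_RInt (V := C_R_CompleteNormedModule) (cint r (fun z => peval P z * Cpow z n)) 0 (2*PI) (RtoC 0).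
Proof.
  revert n; induction P as [|a P IH]; intros n.
  - eapply is_RInt_val.
    + apply (is_RInt_ext (V := C_R_CompleteNormedModule) (fun _ => RtoC 0)).
      * intros x _. toC. unfold cint. simpl peval. ring.
      * apply is_RInt_const.
    + exact (scal_zero_r (K := R_AbsRing) (V := C_R_CompleteNormedModule) _).
  - eapply is_RInt_val.
    + apply (is_RInt_ext (V := C_R_CompleteNormedModule)
        (fun t => Cplus (a * cint r (fun z => Cpow z n) t) (cint r (fun z => peval P z * Cpow z (S n)) t))).
      * intros x _. toC. unfold cint. simpl. ring.
      * apply (is_RInt_plus (V:=C_R_CompleteNormedModule)). apply is_RInt_Cmult. apply mono_int. apply IH.
    + toC. rewrite plusC. ring.
Qed.
Definition Aok (r : R) (f : C -> C) : Prop :=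
  (exists B, (0 <= B)%R /\ forall w, Cmod w = r -> (Cmod (f w) <= B)%R) /\
  forall eps, (0 < eps)%R -> exists P, forall w, Cmod w = r -> (Cmod (f w - peval P w) <= eps)%R.

Definition polyF (r : R) (f : C -> C) (S : list C -> Prop) : Prop :=
  exists eps, (0 < eps)%R /\ forall P, (forall w, Cmod w = r -> (Cmod (f w - peval P w) <= eps)%R) -> S P.

Lemma polyF_proper r f : Aok r f -> ProperFilter (polyF r f).
Proof.
  intros [_ HA]. constructor.
  - intros S [eps [He HS]]. destruct (HA eps He) as [P HP]. exists P. apply HS, HP.
  - constructor.
    + exists 1%R. split. lra. auto.
    + intros S1 S2 [e1 [He1 H1]] [e2 [He2 H2]]. exists (Rmin e1 e2). split.
      apply Rmin_glb_lt; auto.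
      intros P HP. split.
      * apply H1. intros w Hw. eapply Rle_trans. apply HP; auto. apply Rmin_l.
      * apply H2. intros w Hw. eapply Rle_trans. apply HP; auto. apply Rmin_r.
    + intros S1 S2 Himp [e [He H]]. exists e. split; auto.
Qed.

Lemma Cmod_circ_i (r t : R) : (0 <= r)%R -> Cmod ((0,1) * circ_pt r t) = r.
Proof.
  intros Hr. rewrite Cmod_mult, circ_mod; auto.
  replace (Cmod (0,1)) with 1%R. ring.
  unfold Cmod; simpl. replace (0 * (0 * 1) + 1 * (1 * 1))%R with 1%R by ring. rewrite sqrt_1. reflexivity.
Qed.

Lemma A_int (r : R) (f : C -> C) : (0 < r)%R -> Aok r f ->
  is_RInt (V := C_R_CompleteNormedModule) (cint r f) 0 (2*PI) (RtoC 0).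
Proof.
  intros Hr HA.
  assert (PF := polyF_proper r f HA).
  destruct (filterlim_RInt (V := C_R_CompleteNormedModule) (fun P => cint r (peval P)) 0 (2*PI) (polyF r f) PF (cint r f) (fun _ => RtoC 0)) as [If [H1 H2]].
  - intros P. eapply is_RInt_ext. 2: apply (poly_int r P 0).
    intros x _. toC. unfold cint. simpl. ring.
  - intros S [eps HS]. unfold filtermap.
    exists (eps / (2 * r))%R. split.
    + apply Rdiv_lt_0_compat. apply (cond_pos eps). lra.
    + intros P HP. apply HS. intros t. apply (norm_compat1 (K:=R_AbsRing) (V:=C_R_NormedModule)).
      rewrite <- Cmod_norm.
      match goal with |- (Cmod ?X < _)%R => replace X with ((peval P (circ_pt r t) - f (circ_pt r t)) * ((0,1) * circ_pt r t)) end.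
      2:{ toC. unfold cint, minus, plus, opp. simpl. change (prod_plus ?a (prod_opp ?b)) with (Cplus a (Copp b)). ring. }
      rewrite Cmod_mult, Cmod_circ_i by lra.
      assert (Hc : (Cmod (peval P (circ_pt r t) - f (circ_pt r t)) <= eps / (2 * r))%R).
      { rewrite <- Cmod_opp. replace (- (peval P (circ_pt r t) - f (circ_pt r t))) with (f (circ_pt r t) - peval P (circ_pt r t)) by ring.
        apply HP. apply circ_mod. lra. }
      assert (He := cond_pos eps).
      apply Rle_lt_trans with (eps / (2 * r) * r)%R.
      apply Rmult_le_compat_r; lra.
      replace (eps / (2 * r) * r)%R with (eps / 2)%R by (field; lra). lra.
  - assert (If = RtoC 0).
    { refine (filterlim_locally_unique (K := R_AbsRing) (V := C_R_NormedModule) (FF := Proper_StrongProper _ PF) (fun _ => RtoC 0) If (RtoC 0) H1 _).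
      apply filterlim_const. }
    subst. auto.
Qed.
Lemma A_ext r f g : Aok r f -> (forall w, Cmod w = r -> f w = g w) -> Aok r g.
Proof.
  intros [[B [HB0 HB]] HA] E. split.
  - exists B. split; auto. intros w Hw. rewrite <- E; auto.
  - intros eps He. destruct (HA eps He) as [P HP]. exists P. intros w Hw. rewrite <- E; auto.
Qed.

Lemma A_const r c : Aok r (fun _ => c).
Proof.
  split.
  - exists (Cmod c). split. apply Cmod_ge_0. intros; lra.
  - intros eps He. exists (c :: nil). intros w Hw. simpl.
    replace (c - (c + w * RtoC 0)) with (RtoC 0) by ring. rewrite Cmod_0. lra.
Qed.

Lemma A_id r : (0 <= r)%R -> Aok r (fun w => w).
Proof.
  intros Hr. split.
  - exists r. split. auto. intros w Hw; lra.
  - intros eps He. exists (RtoC 0 :: RtoC 1 :: nil). intros w Hw. simpl.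
    replace (w - (RtoC 0 + w * (RtoC 1 + w * RtoC 0))) with (RtoC 0) by ring. rewrite Cmod_0. lra.
Qed.

Lemma Cmod_minus_le (a b : C) : (Cmod (a - b) <= Cmod a + Cmod b)%R.
Proof. unfold Cminus. rewrite <- (Cmod_opp b). apply Cmod_triangle. Qed.

Lemma A_add r f g : Aok r f -> Aok r g -> Aok r (fun w => f w + g w).
Proof.
  intros [[Bf [Hf0 Hf]] Af] [[Bg [Hg0 Hg]] Ag]. split.
  - exists (Bf + Bg)%R. split. lra. intros w Hw.
    eapply Rle_trans. apply Cmod_triangle. specialize (Hf w Hw); specialize (Hg w Hw); lra.
  - intros eps He. destruct (Af (eps/2)%R) as [P HP]. lra. destruct (Ag (eps/2)%R) as [Q HQ]. lra.
    exists (padd P Q). intros w Hw. rewrite peval_padd.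
    replace (f w + g w - (peval P w + peval Q w)) with ((f w - peval P w) + (g w - peval Q w)) by ring.
    eapply Rle_trans. apply Cmod_triangle. specialize (HP w Hw); specialize (HQ w Hw); lra.
Qed.

Lemma A_mul r f g : Aok r f -> Aok r g -> Aok r (fun w => f w * g w).
Proof.
  intros [[Bf [Hf0 Hf]] Af] [[Bg [Hg0 Hg]] Ag]. split.
  - exists (Bf * Bg)%R. split. apply Rmult_le_pos; auto. intros w Hw.
    rewrite Cmod_mult. apply Rmult_le_compat; auto; apply Cmod_ge_0.
  - intros eps He.
    set (e1 := Rmin 1 (eps / (2 * (Bf + 1)))).
    assert (He1 : (0 < e1)%R). { apply Rmin_glb_lt. lra. apply Rdiv_lt_0_compat; lra. }
    assert (He1b : (e1 <= 1)%R) by apply Rmin_l.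
    assert (He1c : (e1 * (Bf + 1) <= eps / 2)%R).
    { apply Rle_trans with (eps / (2 * (Bf + 1)) * (Bf + 1))%R.
      apply Rmult_le_compat_r. lra. apply Rmin_r. right. field. lra. }
    set (e2 := (eps / (2 * (Bg + 1)))%R).
    assert (He2 : (0 < e2)%R) by (apply Rdiv_lt_0_compat; lra).
    assert (He2c : (e2 * (Bg + 1) = eps / 2)%R) by (unfold e2; field; lra).
    destruct (Ag e1 He1) as [Q HQ]. destruct (Af e2 He2) as [P HP].
    exists (pmul P Q). intros w Hw. rewrite peval_pmul.
    replace (f w * g w - peval P w * peval Q w) with (f w * (g w - peval Q w) + (f w - peval P w) * peval Q w) by ring.
    eapply Rle_trans. apply Cmod_triangle. rewrite !Cmod_mult.
    specialize (HP w Hw); specialize (HQ w Hw); specialize (Hf w Hw); specialize (Hg w Hw).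
    assert (HQb : (Cmod (peval Q w) <= Bg + 1)%R).
    { replace (peval Q w) with (g w - (g w - peval Q w)) by ring.
      eapply Rle_trans. apply Cmod_minus_le. lra. }
    assert (T1 : (Cmod (f w) * Cmod (g w - peval Q w) <= Bf * e1)%R).
    { apply Rmult_le_compat; auto; apply Cmod_ge_0. }
    assert (T2 : (Cmod (f w - peval P w) * Cmod (peval Q w) <= e2 * (Bg + 1))%R).
    { apply Rmult_le_compat; auto; apply Cmod_ge_0. }
    nra.
Qed.

Lemma A_pow r n : (0 <= r)%R -> Aok r (fun w => Cpow w n).
Proof.
  intros Hr. induction n.
  - apply (A_ext r (fun _ => RtoC 1)); [apply A_const | intros; reflexivity].
  - apply (A_ext r (fun w => w * Cpow w n)). apply A_mul; auto. apply A_id; auto.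
    intros; reflexivity.
Qed.
Fixpoint gp (c d : C) (M : nat) : list C :=
  match M with O => nil | S M' => (/ c) :: pscal (- d / c) (gp c d M') end.

Lemma gp_eval c d M w : c <> RtoC 0 ->
  (c + d * w) * peval (gp c d M) w = RtoC 1 - Cpow (- d * w / c) M.
Proof.
  intros Hc. induction M as [|M IH].
  - simpl. ring.
  - simpl gp. simpl peval. rewrite peval_pscal.
    replace ((c + d * w) * (/ c + w * (- d / c * peval (gp c d M) w)))
      with ((c + d * w) / c + (- d * w / c) * ((c + d * w) * peval (gp c d M) w)) by (field; auto).
    rewrite IH. simpl Cpow. field. auto.
Qed.

Lemma A_inv_aff r c d : (0 <= r)%R -> (Cmod d * r < Cmod c)%R -> Aok r (fun w => Cinv (c + d * w)).
Proof.
  intros Hr Hdc.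
  assert (Hd0 : (0 <= Cmod d * r)%R) by (apply Rmult_le_pos; auto; apply Cmod_ge_0).
  assert (Hc : c <> RtoC 0). { intro E. rewrite E, Cmod_0 in Hdc. lra. }
  assert (Hlow : forall w, Cmod w = r -> (Cmod c - Cmod d * r <= Cmod (c + d * w))%R).
  { intros w Hw. replace c with ((c + d * w) - d * w) at 1 by ring.
    eapply Rle_trans. apply Rplus_le_compat_r. apply Cmod_minus_le. rewrite Cmod_mult, Hw. lra. }
  assert (Hnz : forall w, Cmod w = r -> c + d * w <> RtoC 0).
  { intros w Hw E. specialize (Hlow w Hw). rewrite E, Cmod_0 in Hlow. lra. }
  set (B := (/ (Cmod c - Cmod d * r))%R).
  assert (HB : (0 < B)%R) by (apply Rinv_0_lt_compat; lra).
  assert (Hinv : forall w, Cmod w = r -> (Cmod (/ (c + d * w)) <= B)%R).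
  { intros w Hw. rewrite Cmod_inv by (apply Hnz; auto). apply Rinv_le_contravar. lra. apply Hlow; auto. }
  split.
  - exists B. split. lra. auto.
  - intros eps He.
    set (th := (Cmod d * r / Cmod c)%R).
    assert (Hcm : (0 < Cmod c)%R) by lra.
    assert (Hth : (Rabs th < 1)%R).
    { rewrite Rabs_pos_eq. unfold th. apply (Rmult_lt_reg_r (Cmod c)); auto. field_simplify; lra.
      unfold th. apply Rdiv_le_0_compat; lra. }
    destruct (pow_lt_1_zero th Hth (eps / B)%R) as [M HM]. apply Rdiv_lt_0_compat; lra.
    exists (gp c d M). intros w Hw.
    assert (E : / (c + d * w) - peval (gp c d M) w = Cpow (- d * w / c) M / (c + d * w)).
    { assert (G := gp_eval c d M w Hc). specialize (Hnz w Hw).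
      assert (S : peval (gp c d M) w = (RtoC 1 - Cpow (- d * w / c) M) / (c + d * w)).
      { rewrite <- G. field. auto. }
      rewrite S. field. auto. }
    rewrite E. unfold Cdiv. rewrite Cmod_mult, Cmod_pow.
    assert (Hu : Cmod (- d * w / c) = th).
    { unfold th. rewrite Cmod_div, Cmod_mult, Cmod_opp, Hw; auto. }
    unfold Cdiv in Hu. rewrite Hu.
    specialize (HM M (le_n M)). rewrite Rabs_pos_eq in HM by (apply pow_le; unfold th; apply Rdiv_le_0_compat; lra).
    specialize (Hinv w Hw).
    apply Rle_trans with (eps / B * B)%R.
    apply Rmult_le_compat; try lra. apply pow_le; unfold th; apply Rdiv_le_0_compat; lra. apply Cmod_ge_0.
    right. field. lra.
Qed.
Close Scope C_scope.

Ltac toR := match goal with |- ?a = ?b => change (@eq R a b) end.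

Lemma Cinv_polar (A th : R) : A <> 0 ->
  Cinv (A * cos th, A * sin th) = (/ A * cos th, - / A * sin th).
Proof.
  intros HA. unfold Cinv. cbn [fst snd].
  assert (E : (A * cos th) ^ 2 + (A * sin th) ^ 2 = A ^ 2).
  { transitivity (A ^ 2 * (Rsqr (sin th) + Rsqr (cos th))). unfold Rsqr; ring. rewrite sin2_cos2; ring. }
  rewrite E.
  apply C_eq; cbn [fst snd]; field; auto.
Qed.

Lemma Cpowz_circ (r : R) (k : Z) : 0 < r ->
  exists A B c, forall t, Cpowz (circ_pt r t) k = (A * cos (c * t), B * sin (c * t)).
Proof.
  intros Hr. unfold Cpowz. destruct (Z.leb_spec 0 k).
  - exists (r ^ Z.to_nat k), (r ^ Z.to_nat k), (INR (Z.to_nat k)). intros t. apply Cpow_circ.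
  - exists (/ r ^ Z.to_nat (- k)), (- / r ^ Z.to_nat (- k)), (INR (Z.to_nat (- k))). intros t.
    rewrite Cpow_circ, Cinv_polar. reflexivity. apply pow_nonzero. lra.
Qed.

Lemma Cpowz_ex (r : R) (k : Z) : 0 < r ->
  ex_RInt (V := C_R_CompleteNormedModule) (cint r (fun z => Cpowz z k)) 0 (2 * PI).
Proof.
  intros Hr. destruct (Cpowz_circ r k Hr) as [A [B [c Hc]]].
  apply (ex_RInt_ext (V := C_R_CompleteNormedModule) (fun t => Cmult (A * cos (c * t), B * sin (c * t)) (Cmult (0,1) (circ_pt r t)))).
  { intros x _. unfold cint. rewrite Hc. reflexivity. }
  apply (ex_RInt_fct_extend_pair (U := R_NormedModule) (V := R_NormedModule)).
  - apply (ex_RInt_ext (V := R_NormedModule) (fun t => - (A * cos (c * t)) * (r * sin t) - B * sin (c * t) * (r * cos t))).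
    { intros x _. toR. unfold Cmult, circ_pt. cbn [fst snd]. ring. }
    apply (ex_RInt_continuous (V := R_CompleteNormedModule)). intros z _.
    apply (ex_derive_continuous (K:=R_AbsRing) (V:=R_NormedModule)). auto_derive. auto.
  - apply (ex_RInt_ext (V := R_NormedModule) (fun t => A * cos (c * t) * (r * cos t) - B * sin (c * t) * (r * sin t))).
    { intros x _. toR. unfold Cmult, circ_pt. cbn [fst snd]. ring. }
    apply (ex_RInt_continuous (V := R_CompleteNormedModule)). intros z _.
    apply (ex_derive_continuous (K:=R_AbsRing) (V:=R_NormedModule)). auto_derive. auto.
Qed.

Definition mix (n : nat) (xi env : nat -> C) : nat -> C :=
  fun k => if Nat.ltb k n then xi k else env k.

Lemma iter_mix (r : R) (n : nat) (F : (nat -> C) -> C) (env : nat -> C) :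
  iter_circ r (S n) (fun xi => F (mix (S n) xi env)) =
  circ_int r (fun z => iter_circ r n (fun xi => F (mix n xi (fun k => if Nat.eqb k n then z else env k)))).
Proof.
  simpl. f_equal. apply functional_extensionality. intros z. f_equal.
  apply functional_extensionality. intros xi. f_equal.
  apply functional_extensionality. intros k. unfold mix.
  destruct (Nat.ltb_spec k (S n)), (Nat.eqb_spec k n), (Nat.ltb_spec k n); auto; lia.
Qed.

Lemma circ_int_zero (r : R) (f : C -> C) : (forall t, f (circ_pt r t) = RtoC 0) -> circ_int r f = RtoC 0.
Proof.
  intros H. unfold circ_int. apply (is_RInt_unique (V := C_R_CompleteNormedModule)).
  eapply is_RInt_val.
  - apply (is_RInt_ext (V := C_R_CompleteNormedModule) (fun _ => RtoC 0)).
    + intros x _. rewrite H. toC. ring.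
    + apply is_RInt_const.
  - exact (scal_zero_r (K := R_AbsRing) (V := C_R_CompleteNormedModule) _).
Qed.

Lemma down (r : R) (F : (nat -> C) -> C) (m : nat) : 0 <= r ->
  (forall env, (forall k, (S m <= k)%nat -> Cmod (env k) = r) ->
     iter_circ r (S m) (fun xi => F (mix (S m) xi env)) = RtoC 0) ->
  forall n, (S m <= n)%nat -> forall env, (forall k, (n <= k)%nat -> Cmod (env k) = r) ->
     iter_circ r n (fun xi => F (mix n xi env)) = RtoC 0.
Proof.
  intros Hr Hm n. induction n as [|n IH]; intros Hn env Henv.
  - lia.
  - destruct (Nat.eq_dec (S m) (S n)) as [E|E].
    + rewrite <- E in *. apply Hm; auto.
    + rewrite iter_mix. apply circ_int_zero. intros t. apply IH. lia.
      intros k Hk. destruct (Nat.eqb_spec k n). apply circ_mod; auto. apply Henv. lia.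
Qed.

Definition Cprod_app (l1 l2 : list C) : Cprod (l1 ++ l2) = Cmult (Cprod l1) (Cprod l2).
Proof. induction l1 as [|a l IH]; simpl. toC. ring. rewrite IH. toC. ring. Qed.

Lemma iter_S (r : R) (n : nat) (F : (nat -> C) -> C) :
  iter_circ r (S n) F = circ_int r (fun z => iter_circ r n (fun xi => F (fun k => if Nat.eqb k n then z else xi k))).
Proof. reflexivity. Qed.

Lemma iter_prod (r : R) (g : nat -> C -> C) :
  (forall i, ex_RInt (V := C_R_CompleteNormedModule) (cint r (g i)) 0 (2 * PI)) ->
  forall n c, iter_circ r n (fun xi => Cmult (Cprod (map (fun i => g i (xi i)) (seq 0 n))) c) =
    Cmult (Cprod (map (fun i => circ_int r (g i)) (seq 0 n))) c.
Proof.
  intros Hg n. induction n as [|n IH]; intros c.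
  - reflexivity.
  - rewrite iter_S.
    transitivity (circ_int r (fun z => Cmult (Cprod (map (fun i => circ_int r (g i)) (seq 0 n))) (Cmult c (g n z)))).
    + f_equal. apply functional_extensionality. intros z. rewrite <- IH. f_equal.
      apply functional_extensionality. intros xi.
      rewrite seq_S, map_app, Cprod_app. simpl.
      rewrite Nat.eqb_refl.
      replace (map (fun i => g i (if Nat.eqb i n then z else xi i)) (seq 0 n)) with (map (fun i => g i (xi i)) (seq 0 n)).
      2:{ apply map_ext_in. intros i Hi. apply in_seq in Hi. destruct (Nat.eqb_spec i n). lia. auto. }
      toC. ring.
    + set (K := Cprod (map (fun i => circ_int r (g i)) (seq 0 n))).
      rewrite seq_S, map_app, Cprod_app. simpl. fold K.
      destruct (Hg n) as [I HI].
      assert (E : circ_int r (g n) = I) by (apply (is_RInt_unique (V := C_R_CompleteNormedModule)); exact HI).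
      rewrite E. unfold circ_int. apply (is_RInt_unique (V := C_R_CompleteNormedModule)).
      eapply is_RInt_val.
      * apply (is_RInt_ext (V := C_R_CompleteNormedModule) (fun t => Cmult (Cmult K c) (cint r (g n) t))).
        { intros x _. toC. unfold cint. ring. }
        apply is_RInt_Cmult. exact HI.
      * toC. ring.
Qed.

Definition Fint (p : R) (N : nat) (X Y : nat -> Z) (sigma : nat -> nat) (E : nat -> nat -> Echoice)
  (xi : nat -> C) : C :=
  Cmult (inv_prod N sigma (fun b a => Eval p (1 - p) (E b a) (xi a) (xi b)))
        (Cprod (map (fun i => Cpowz (xi (sigma i)) (X i - Y (sigma i) - 1)%Z) (seq 0 N))).

Definition Gc (p : R) (N m : nat) (X Y : nat -> Z) (sigma : nat -> nat) (E : nat -> nat -> Echoice)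
  (xi : nat -> C) : C :=
  Cmult (inv_prod N sigma (fun b a => Eval p (1 - p) (E b a) (xi a) (xi b)))
        (Cprod (map (fun i => Cpowz (xi (sigma i)) (X i - Y (sigma i) - 1)%Z) (seq m (N - m)))).

Lemma inv_prod_ext (N : nat) (sigma : nat -> nat) (G1 G2 : nat -> nat -> C) :
  (forall i j, (i < N)%nat -> (j < N)%nat -> (i < j)%nat -> (sigma j < sigma i)%nat ->
     G1 (sigma i) (sigma j) = G2 (sigma i) (sigma j)) ->
  inv_prod N sigma G1 = inv_prod N sigma G2.
Proof.
  intros H. unfold inv_prod. f_equal. rewrite !flat_map_concat_map. f_equal.
  apply map_ext_in. intros i Hi. apply map_ext_in. intros j Hj.
  apply in_seq in Hi, Hj.
  destruct (Nat.ltb_spec i j), (Nat.ltb_spec (sigma j) (sigma i)); simpl; auto.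
  apply H; lia.
Qed.

Lemma Cprod_map_ext (l : list nat) (f g : nat -> C) :
  (forall i, In i l -> f i = g i) -> Cprod (map f l) = Cprod (map g l).
Proof. intros H. f_equal. apply map_ext_in. auto. Qed.

Lemma Fint_local (p : R) N X Y sigma E (xi env : nat -> C) :
  (forall i, (i < N)%nat -> (sigma i < N)%nat) ->
  Fint p N X Y sigma E (mix N xi env) = Fint p N X Y sigma E xi.
Proof.
  intros Hs. unfold Fint. f_equal.
  - apply inv_prod_ext. intros i j Hi Hj _ _. unfold mix.
    pose proof (Hs i Hi); pose proof (Hs j Hj).
    destruct (Nat.ltb_spec (sigma j) N), (Nat.ltb_spec (sigma i) N); auto; lia.
  - apply Cprod_map_ext. intros i Hi. apply in_seq in Hi. unfold mix.
    destruct (Nat.ltb_spec (sigma i) N); auto. pose proof (Hs i ltac:(lia)); lia.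
Qed.

Lemma Fint_factor (p : R) N m X Y sigma E (xi env : nat -> C) :
  (m <= N)%nat ->
  (forall i, (i < m)%nat -> sigma i = i) ->
  (forall i, (m <= i)%nat -> (i < N)%nat -> (m <= sigma i)%nat) ->
  (forall i j, (i < j)%nat -> (j < N)%nat -> (sigma j < sigma i)%nat -> (m <= sigma j)%nat) ->
  Fint p N X Y sigma E (mix m xi env) =
  Cmult (Cprod (map (fun i => Cpowz (xi i) (X i - Y i - 1)%Z) (seq 0 m))) (Gc p N m X Y sigma E env).
Proof.
  intros HmN Hfix Hge Hinv. unfold Fint, Gc.
  assert (Hsq : seq 0 N = seq 0 m ++ seq m (N - m)).
  { replace N with (m + (N - m))%nat at 1 by lia. rewrite seq_app. reflexivity. }
  rewrite Hsq.
  rewrite map_app, Cprod_app.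
  rewrite (inv_prod_ext N sigma _ (fun b a => Eval p (1 - p) (E b a) (env a) (env b))).
  2:{ intros i j Hi Hj Hij Hsij. unfold mix.
      pose proof (Hinv i j Hij Hj Hsij).
      destruct (Nat.ltb_spec (sigma j) m), (Nat.ltb_spec (sigma i) m); auto; lia. }
  rewrite (Cprod_map_ext (seq m (N - m)) _ (fun i => Cpowz (env (sigma i)) (X i - Y (sigma i) - 1)%Z)).
  2:{ intros i Hi. apply in_seq in Hi. unfold mix. pose proof (Hge i ltac:(lia) ltac:(lia)).
      destruct (Nat.ltb_spec (sigma i) m); auto; lia. }
  rewrite (Cprod_map_ext (seq 0 m) _ (fun i => Cpowz (xi i) (X i - Y i - 1)%Z)).
  2:{ intros i Hi. apply in_seq in Hi. unfold mix. rewrite Hfix by lia.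
      destruct (Nat.ltb_spec i m); auto; lia. }
  toC. ring.
Qed.

Lemma A_Cprod_map (r : R) (l : list nat) (h : nat -> C -> C) :
  (forall i, In i l -> Aok r (h i)) -> Aok r (fun w => Cprod (map (fun i => h i w) l)).
Proof.
  induction l as [|a l IH]; intros H.
  - apply (A_ext r (fun _ => RtoC 1)). apply A_const. intros; reflexivity.
  - apply (A_ext r (fun w => Cmult (h a w) (Cprod (map (fun i => h i w) l)))).
    + apply A_mul. apply H; simpl; auto. apply IH. intros i Hi; apply H; simpl; auto.
    + intros; reflexivity.
Qed.

Lemma A_Cprod_flat (r : R) (l1 l2 : list nat) (H : nat -> nat -> C -> C) :
  (forall i j, In i l1 -> In j l2 -> Aok r (H i j)) ->
  Aok r (fun w => Cprod (flat_map (fun i => map (fun j => H i j w) l2) l1)).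
Proof.
  induction l1 as [|a l IH]; intros HH.
  - apply (A_ext r (fun _ => RtoC 1)). apply A_const. intros; reflexivity.
  - apply (A_ext r (fun w => Cmult (Cprod (map (fun j => H a j w) l2)) (Cprod (flat_map (fun i => map (fun j => H i j w) l2) l)))).
    + apply A_mul. apply A_Cprod_map. intros j Hj; apply HH; simpl; auto.
      apply IH. intros i j Hi Hj; apply HH; simpl; auto.
    + intros w _. simpl. rewrite Cprod_app. reflexivity.
Qed.

Lemma Eval_shape (p : R) (e : Echoice) (b : C) :
  exists al be, forall w, Eval p (1 - p) e w b =
    Cmult (Cplus al (Cmult be w)) (Cinv (Cplus (RtoC p) (Cmult (Cminus (Cmult (RtoC (1 - p)) b) (RtoC 1)) w))).
Proof.
  assert (ED : forall w, Dden p (1 - p) w b = Cplus (RtoC p) (Cmult (Cminus (Cmult (RtoC (1 - p)) b) (RtoC 1)) w)).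
  { intros w. unfold Dden. toC. ring. }
  destruct e.
  - exists (Copp (Cminus (RtoC p) b)), (Copp (Cmult (RtoC (1 - p)) b)). intros w.
    simpl. unfold S_f. rewrite ED. unfold Cdiv. toC. ring.
  - exists (Cmult (RtoC p) (Cminus b (RtoC 1))), (Copp (Cmult (RtoC (1 - p)) (Cminus b (RtoC 1)))). intros w.
    simpl. unfold P_f. rewrite ED. unfold Cdiv. toC. ring.
  - exists (Copp (Cminus (RtoC p) (Cmult (RtoC (1 - p)) b))), (Cminus (RtoC p) (Cmult (RtoC (1 - p)) b)). intros w.
    simpl. unfold Q_f. rewrite ED. unfold Cdiv. toC. ring.
  - exists (Cmult (RtoC p) b), (Copp (RtoC p)). intros w.
    simpl. unfold T_f. rewrite ED. unfold Cdiv. toC. ring.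
  - exists (Cmult (RtoC (1 - p)) b), (Copp (RtoC (1 - p))). intros w.
    simpl. unfold T_f. rewrite ED. unfold Cdiv. toC. ring.
  - exists (RtoC 0), (RtoC 0). intros w. simpl. toC. ring.
Qed.

Lemma A_Eval (p r : R) (e : Echoice) (b : C) :
  0 < p < 1 -> 0 <= r -> (1 - p) * (r * r) + r < p -> Cmod b = r ->
  Aok r (fun w => Eval p (1 - p) e w b).
Proof.
  intros Hp Hr Hq Hb. destruct (Eval_shape p e b) as [al [be H]].
  eapply A_ext. 2:{ intros w _. symmetry. apply H. }
  apply A_mul.
  - apply A_add. apply A_const. apply A_mul. apply A_const. apply A_id; auto.
  - apply A_inv_aff; auto.
    rewrite Cmod_R, Rabs_pos_eq by lra.
    assert (Hd : Cmod (Cminus (Cmult (RtoC (1 - p)) b) (RtoC 1)) <= (1 - p) * r + 1).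
    { eapply Rle_trans. apply Cmod_minus_le. rewrite Cmod_mult, Cmod_R, Rabs_pos_eq, Hb, Cmod_1 by lra. lra. }
    apply Rle_lt_trans with (((1 - p) * r + 1) * r).
    apply Rmult_le_compat_r; auto. nra.
Qed.

Lemma A_Gc (p r : R) N m X Y sigma E (env : nat -> C) :
  0 < p < 1 -> 0 <= r -> (1 - p) * (r * r) + r < p ->
  (forall k, (S m <= k)%nat -> Cmod (env k) = r) ->
  sigma m <> m ->
  (forall i j, (i < j)%nat -> (j < N)%nat -> (sigma j < sigma i)%nat -> (m <= sigma j)%nat) ->
  (forall i, (m <= i)%nat -> (i < N)%nat -> sigma i = m -> (0 <= X i - Y m - 1)%Z) ->
  Aok r (fun w => Gc p N m X Y sigma E (fun k => if Nat.eqb k m then w else env k)).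
Proof.
  intros Hp Hr Hq Henv Hm Hinv Hexp. unfold Gc. apply A_mul.
  - unfold inv_prod.
    apply (A_Cprod_flat r (seq 0 N) (seq 0 N) (fun i j w =>
      if andb (Nat.ltb i j) (Nat.ltb (sigma j) (sigma i))
      then Eval p (1 - p) (E (sigma i) (sigma j)) (if Nat.eqb (sigma j) m then w else env (sigma j))
                                                 (if Nat.eqb (sigma i) m then w else env (sigma i))
      else RtoC 1)).
    intros i j Hi Hj. apply in_seq in Hi, Hj.
    destruct (Nat.ltb_spec i j), (Nat.ltb_spec (sigma j) (sigma i)); simpl; try apply A_const.
    pose proof (Hinv i j ltac:(lia) ltac:(lia) ltac:(lia)).
    destruct (Nat.eqb_spec (sigma i) m); [lia|].
    destruct (Nat.eqb_spec (sigma j) m).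
    + apply A_Eval; auto. apply Henv. lia.
    + apply A_const.
  - apply (A_Cprod_map r (seq m (N - m)) (fun i w =>
      Cpowz (if Nat.eqb (sigma i) m then w else env (sigma i)) (X i - Y (sigma i) - 1)%Z)).
    intros i Hi. apply in_seq in Hi.
    destruct (Nat.eqb_spec (sigma i) m) as [e|e].
    + rewrite e. pose proof (Hexp i ltac:(lia) ltac:(lia) e) as He.
      apply (A_ext r (fun w => Cpow w (Z.to_nat (X i - Y m - 1)))). apply A_pow; auto.
      intros w _. unfold Cpowz. destruct (Z.leb_spec 0 (X i - Y m - 1)); [reflexivity | lia].
    + apply A_const.
Qed.

Lemma find_min (N : nat) (sigma : nat -> nat) :
  (forall i, (i < N)%nat -> sigma i = i) \/
  exists m, (m < N)%nat /\ sigma m <> m /\ forall i, (i < m)%nat -> sigma i = i.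
Proof.
  induction N as [|n IH].
  - left. intros; lia.
  - destruct IH as [H|H].
    + destruct (Nat.eq_dec (sigma n) n).
      * left. intros i Hi. destruct (Nat.eq_dec i n). subst; auto. apply H; lia.
      * right. exists n. split; auto.
    + right. destruct H as [m [Hm1 Hm2]]. exists m. split; auto.
Qed.

Theorem mainTheorem5 (p r : R) (N : nat) (X Y : nat -> Z) (sigma : nat -> nat)
  (E : nat -> nat -> Echoice) :
  0 < p < 1 ->
  0 < r < (-1 + sqrt (1 + 4 * p * (1 - p))) / (2 * (1 - p)) ->
  (forall i j, (i < j < N)%nat -> (X i < X j)%Z) ->
  (forall i j, (i < j < N)%nat -> (Y i < Y j)%Z) ->
  (forall i, (i < N)%nat -> (Y i <= X i)%Z) ->
  is_perm N sigma ->
  (exists i, (i < N)%nat /\ sigma i <> i) ->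
  iter_circ r N (fun xi =>
    Cmult
      (inv_prod N sigma (fun b a => Eval p (1 - p) (E b a) (xi a) (xi b)))
      (Cprod (map (fun i => Cpowz (xi (sigma i)) (X i - Y (sigma i) - 1)%Z)
                  (seq 0 N))))
  = RtoC 0.
Proof.
  intros Hp Hr HX HY HXY [Hrange Hinj] [i0 [Hi0 Hs0]].
  assert (Hq : (1 - p) * (r * r) + r < p).
  { destruct Hr as [Hr0 Hr1].
    assert (Hq0 : 0 < 1 - p) by lra.
    assert (H1 : 2 * (1 - p) * r + 1 < sqrt (1 + 4 * p * (1 - p))).
    { apply (Rmult_lt_compat_r (2 * (1 - p))) in Hr1; [|lra].
      unfold Rdiv in Hr1. rewrite Rmult_assoc, Rinv_l, Rmult_1_r in Hr1 by lra. lra. }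
    assert (H2 : (2 * (1 - p) * r + 1) ^ 2 < 1 + 4 * p * (1 - p)).
    { apply sqrt_lt_0_alt. rewrite sqrt_pow2 by nra. auto. }
    nra. }
  destruct Hr as [Hr0 _].
  destruct (find_min N sigma) as [Hid | [m [HmN [Hm Hfix]]]].
  { exfalso. apply Hs0, Hid, Hi0. }
  assert (Hge : forall i, (m <= i)%nat -> (i < N)%nat -> (m <= sigma i)%nat).
  { intros i Hi1 Hi2. destruct (Nat.lt_ge_cases (sigma i) m) as [Hl|Hl]; auto.
    exfalso. assert (E1 : sigma (sigma i) = sigma i) by (apply Hfix; auto).
    assert (E2 : sigma i = i) by (apply Hinj; auto; apply Hrange; auto). lia. }
  assert (Hinv : forall i j, (i < j)%nat -> (j < N)%nat -> (sigma j < sigma i)%nat -> (m <= sigma j)%nat).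
  { intros i j Hij HjN Hs. destruct (Nat.lt_ge_cases j m) as [Hl|Hl].
    - rewrite (Hfix j Hl), (Hfix i ltac:(lia)) in Hs. lia.
    - apply Hge; auto. }
  assert (Hexp : forall i, (m <= i)%nat -> (i < N)%nat -> sigma i = m -> (0 <= X i - Y m - 1)%Z).
  { intros i Hi1 Hi2 Hsi. assert (i <> m) by (intro; subst; auto).
    pose proof (HX m i ltac:(lia)). pose proof (HXY m HmN). lia. }
  change (iter_circ r N (Fint p N X Y sigma E) = RtoC 0).
  set (env0 := fun _ : nat => circ_pt r 0).
  transitivity (iter_circ r N (fun xi => Fint p N X Y sigma E (mix N xi env0))).
  { f_equal. apply functional_extensionality. intros xi. rewrite Fint_local; auto. }
  apply (down r (Fint p N X Y sigma E) m); [lra | | lia | intros; apply circ_mod; lra].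
  intros env Henv.
  rewrite iter_mix.
  set (K := Cprod (map (fun i => circ_int r (fun z => Cpowz z (X i - Y i - 1)%Z)) (seq 0 m))).
  transitivity (circ_int r (fun z => Cmult K (Gc p N m X Y sigma E (fun k => if Nat.eqb k m then z else env k)))).
  { f_equal. apply functional_extensionality. intros z.
    transitivity (iter_circ r m (fun xi => Cmult (Cprod (map (fun i => (fun i z => Cpowz z (X i - Y i - 1)%Z) i (xi i)) (seq 0 m)))
                                   (Gc p N m X Y sigma E (fun k => if Nat.eqb k m then z else env k)))).
    - f_equal. apply functional_extensionality. intros xi. apply Fint_factor; auto. lia.
    - exact (iter_prod r (fun i z => Cpowz z (X i - Y i - 1)%Z) (fun i => Cpowz_ex r _ Hr0) m _). }
  unfold circ_int. apply (is_RInt_unique (V := C_R_CompleteNormedModule)).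
  eapply is_RInt_val.
  - apply (is_RInt_ext (V := C_R_CompleteNormedModule)
      (fun t => Cmult K (cint r (fun w => Gc p N m X Y sigma E (fun k => if Nat.eqb k m then w else env k)) t))).
    { intros x _. toC. unfold cint. ring. }
    apply is_RInt_Cmult. apply A_int; auto.
    apply A_Gc; auto. lra.
  - toC. ring.
Qed.
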